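(* Let $p_0<0$, $\alpha\in(0,1)$, $\mathbb{S}:=\mathbb{R}/(2\pi\mathbb{Z})$, $\Omega:=\mathbb{S}\times(p_0,0)$, and let $N\ge3$ be an integer. Let $u_1,\dots,u_5$ be functions on $\overline\Omega$ with $\partial_q^n u_i\in C^\alpha(\overline\Omega)$ for all $0\le n\le N$ and $1\le i\le 5$. \begin{itemize} \item[(i)] If $L\ge1$ and $\|\partial_q^n u_i\|_\alpha\le L^{n-3/2}(n-2)!$ for all $2\le n\le N$ (and all $i$), then there exists a constant $C_0>1$ such that \[\|\partial_q^n(u_1u_2u_3u_4u_5)\|_\alpha\le C_0\Big(1+\sum_{i=1}^5\sum_{l=0}^1\|\partial_q^l u_i\|_\alpha\Big)^{16}L^{n-3/2}(n-2)!\quad\text{for all } 2\le n\le N.\] \item[(ii)] If $L\ge1$ and $\|\partial_q^n u_i\|_\alpha\le L^{n-1}(n-2)!$ for all $2\le n\le N$ (and all $i$), then there exists a constant $C_1>1$ such that \[\|\partial_q^n(u_1u_2u_3)\|_\alpha\le C_1\Big(1+\sum_{i=1}^3\sum_{l=0}^1\|\partial_q^l u_i\|_\alpha\Big)^{6}L^{n-1}(n-2)!\quad\text{for all } 2\le n\le N.\] \item[(iii)] If $L\ge1$ and $\|\partial_q^n u_i\|_\alpha\le L^{n-2}(n-3)!$ for all $3\le n\le N$ (and all $i$), then there exists a constant $C_2>1$ such that \[\|\partial_q^n(u_1u_2)\|_\alpha\le C_2\Big(1+\sum_{i=1}^2\sum_{l=0}^2\|\partial_q^l u_i\|_\alpha\Big)^{2}L^{n-2}(n-3)!\quad\text{for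 all } 3\le n\le N.\] \end{itemize} The constants $C_0$, $C_1$ and $C_2$ do not depend on $L$.
   Context: $\|\cdot\|_\alpha$ denotes the norm of the Hölder space $C^\alpha(\overline\Omega)$, normalized so that $\|uv\|_\alpha\le\|u\|_\alpha\|v\|_\alpha$. $\partial_q$ denotes differentiation with respect to the first variable $q\in\mathbb{S}$. *)

(* Defs.v *)
From Stdlib Require Import Reals Factorial.
From Coquelicot Require Import Coquelicot.
Open Scope R_scope.

(* Points of the closure of Omega = S x (p0,0) are represented by (q,p) with
   q : R (a representative of q mod 2*PI) and p0 <= p <= 0. Functions on the
   closure are functions R -> R -> R that are 2*PI-periodic in q. *)
Definition in_clos (p0 q p : R) : Prop := p0 <= p <= 0.

Definition periodic_q (u : R -> R -> R) : Prop :=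
  forall q p, u (q + 2 * PI) p = u q p.

Definition dq (n : nat) (u : R -> R -> R) : R -> R -> R :=
  fun q p => Derive_n (fun q' => u q' p) n q.

Definition smooth_q (p0 : R) (N : nat) (u : R -> R -> R) : Prop :=
  forall p, p0 <= p <= 0 -> forall n, (n < N)%nat -> forall q,
    ex_derive (Derive_n (fun q' => u q' p) n) q.

Definition sup_norm (p0 : R) (f : R -> R -> R) : Rbar :=
  Lub_Rbar (fun r => exists q p, in_clos p0 q p /\ r = Rabs (f q p)).

(* Hoelder seminorm; for 2*PI-periodic f the Euclidean distance between
   representatives gives the same supremum as the quotient distance on S x R *)
Definition holder_semi (p0 alpha : R) (f : R -> R -> R) : Rbar :=
  Lub_Rbar (fun r => exists q p q' p',
    in_clos p0 q p /\ in_clos p0 q' p' /\ (q, p) <> (q', p') /\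
    r = Rabs (f q p - f q' p') /
        Rpower (sqrt ((q - q') ^ 2 + (p - p') ^ 2)) alpha).

(* ||f||_alpha = |f|_0 + [f]_alpha (satisfies ||uv|| <= ||u|| ||v||),
   valued in the extended reals (+oo if f is not in C^alpha) *)
Definition holder_normE (p0 alpha : R) (f : R -> R -> R) : Rbar :=
  Rbar_plus (sup_norm p0 f) (holder_semi p0 alpha f).

Definition in_holder (p0 alpha : R) (f : R -> R -> R) : Prop :=
  is_finite (sup_norm p0 f) /\ is_finite (holder_semi p0 alpha f).

(* real-valued norm, meaningful for f in C^alpha *)
Definition holder_norm (p0 alpha : R) (f : R -> R -> R) : R :=
  real (holder_normE p0 alpha f).

Definition admissible (p0 alpha : R) (N : nat) (u : R -> R -> R) : Prop :=
  periodic_q u /\ smooth_q p0 N u /\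
  forall n, (n <= N)%nat -> in_holder p0 alpha (dq n u).

(* Main.v *)
Require Import Defs.
From Stdlib Require Import Reals Factorial Lra Lia Psatz.
From Coquelicot Require Import Coquelicot.
Open Scope R_scope.

Fixpoint bin (n k : nat) : R :=
  match n, k with
  | _, O => 1
  | O, S _ => 0
  | S n', S k' => bin n' k' + bin n' (S k')
  end.

Lemma bin_n0 n : bin n 0 = 1.
Proof. destruct n; reflexivity. Qed.

Lemma bin_gt n : forall k, (n < k)%nat -> bin n k = 0.
Proof.
  induction n as [|n IH]; intros [|k] H; simpl; try lia; try reflexivity.
  rewrite !IH; try lia. ring.
Qed.

Lemma bin_ge0 n : forall k, 0 <= bin n k.
Proof.
  induction n as [|n IH]; intros [|k]; simpl; try lra.
  specialize (IH k) as H1. specialize (IH (S k)) as H2. lra.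
Qed.

Lemma bin_fact n : forall k, (k <= n)%nat ->
  bin n k * INR (fact k) * INR (fact (n - k)) = INR (fact n).
Proof.
  induction n as [|n IH]; intros [|k] H.
  - simpl. ring.
  - lia.
  - simpl bin. rewrite Nat.sub_0_r. simpl fact at 1. simpl INR at 1. ring.
  - simpl bin.
    destruct (Nat.eq_dec k n) as [->|Hk].
    + rewrite (bin_gt n (S n)) by lia. rewrite Nat.sub_diag.
      pose proof (IH n (le_n n)) as Hn. rewrite Nat.sub_diag in Hn.
      rewrite fact_simpl, mult_INR. change (INR (fact 0)) with 1 in *.
      transitivity (INR (S n) * (bin n n * INR (fact n) * 1)); [ring | rewrite Hn; ring].
    + assert (Hk' : (k < n)%nat) by lia.
      pose proof (IH k ltac:(lia)) as H1.
      pose proof (IH (S k) ltac:(lia)) as H2.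
      destruct (n - k)%nat as [|j] eqn:E; [lia|].
      assert (Ej : (n - S k)%nat = j) by lia. rewrite Ej in H2.
      replace (S n - S k)%nat with (S j) by lia.
      rewrite !fact_simpl, !mult_INR in *.
      assert (Hn : INR (S n) = INR (S k) + INR (S j)).
      { rewrite <- plus_INR. f_equal. lia. }
      rewrite Hn.
      set (x := bin n k) in *. set (y := bin n (S k)) in *.
      set (a := INR (fact k)) in *. set (b := INR (fact j)) in *.
      transitivity (INR (S k) * (x * a * (INR (S j) * b)) + INR (S j) * (y * (INR (S k) * a) * b)).
      { ring. }
      rewrite H1, H2. ring.
Qed.

Lemma is_derive_sumR (F : nat -> R -> R) (dF : nat -> R) n x :
  (forall k, (k <= n)%nat -> is_derive (F k) x (dF k)) ->
  is_derive (fun y => sum_f_R0 (fun k => F k y) n) x (sum_f_R0 dF n).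
Proof.
  induction n as [|n IH]; intros H; simpl.
  - apply H; lia.
  - apply (is_derive_plus (fun y => sum_f_R0 (fun k => F k y) n) (F (S n))).
    + apply IH. intros; apply H; lia.
    + apply H; lia.
Qed.

Definition sm (N : nat) (f : R -> R) : Prop :=
  forall n, (n < N)%nat -> forall x, ex_derive (Derive_n f n) x.

Definition LS (f g : R -> R) (n : nat) (x : R) : R :=
  sum_f_R0 (fun k => bin n k * Derive_n f k x * Derive_n g (n - k) x) n.

Lemma pascal_sum (A : nat -> nat -> R) n :
  sum_f_R0 (fun k => bin n k * (A (S k) (n - k)%nat + A k (S (n - k)))) n =
  sum_f_R0 (fun k => bin (S n) k * A k (S n - k)%nat) (S n).
Proof.
  rewrite (decomp_sum _ (S n)) by lia. simpl Nat.pred.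
  simpl bin at 1. rewrite Nat.sub_0_r.
  transitivity (A 0%nat (S n) + sum_f_R0 (fun i => bin n i * A (S i) (n - i)%nat) n
     + sum_f_R0 (fun i => bin n (S i) * A (S i) (n - i)%nat) n).
  2:{ rewrite Rplus_assoc, <- sum_plus. f_equal; [simpl; ring|]. apply sum_eq. intros i Hi.
      simpl. ring. }
  assert (E : sum_f_R0 (fun k => bin n k * A k (S n - k)%nat) (S n) =
     A 0%nat (S n) + sum_f_R0 (fun i => bin n (S i) * A (S i) (n - i)%nat) n).
  { rewrite (decomp_sum _ (S n)) by lia. simpl Nat.pred. rewrite bin_n0, Nat.sub_0_r, Rmult_1_l. reflexivity. }
  assert (E2 : sum_f_R0 (fun k => bin n k * A k (S n - k)%nat) (S n) =
     sum_f_R0 (fun k => bin n k * A k (S (n - k))) n).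
  { rewrite tech5, (bin_gt n (S n)) by lia. rewrite Rmult_0_l, Rplus_0_r.
    apply sum_eq. intros i Hi. rewrite (Nat.sub_succ_l i n Hi). ring. }
  rewrite (sum_eq _ (fun k => bin n k * A (S k) (n - k)%nat + bin n k * A k (S (n - k))))
    by (intros; ring).
  rewrite sum_plus, <- E2, E. ring.
Qed.

Lemma LS_derive N f g : sm N f -> sm N g -> forall n, (n < N)%nat -> forall x,
  is_derive (LS f g n) x (LS f g (S n) x).
Proof.
  intros Hf Hg n Hn x. unfold LS at 1.
  assert (H : is_derive (fun y => sum_f_R0 (fun k => bin n k * Derive_n f k y * Derive_n g (n - k) y) n) x
    (sum_f_R0 (fun k => bin n k * (Derive_n f (S k) x * Derive_n g (n - k) x + Derive_n f k x * Derive_n g (S (n - k)) x)) n)).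
  { apply (is_derive_sumR (fun k y => bin n k * Derive_n f k y * Derive_n g (n - k) y)).
    intros k Hk.
    assert (Ef := Hf k ltac:(lia) x). assert (Eg := Hg (n - k)%nat ltac:(lia) x).
    auto_derive.
    - tauto.
    - simpl. change (Derive (fun x0 : R => Derive_n f k x0) x) with (Derive (Derive_n f k) x). change (Derive (fun x0 : R => Derive_n g (n-k) x0) x) with (Derive (Derive_n g (n-k)) x). ring. }
  unfold LS.
  replace (sum_f_R0 (fun k => bin (S n) k * Derive_n f k x * Derive_n g (S n - k) x) (S n))
    with (sum_f_R0 (fun k => bin (S n) k * (Derive_n f k x * Derive_n g (S n - k) x)) (S n))
    by (apply sum_eq; intros; ring).
  rewrite <- (pascal_sum (fun i j => Derive_n f i x * Derive_n g j x)).
  exact H.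
Qed.

Lemma leibniz N f g : sm N f -> sm N g -> forall n, (n <= N)%nat -> forall x,
  Derive_n (fun y => f y * g y) n x = LS f g n x.
Proof.
  intros Hf Hg n. induction n as [|n IH]; intros Hn x.
  - unfold LS. simpl. ring.
  - simpl Derive_n.
    rewrite (Derive_ext _ (LS f g n)) by (intro t; apply IH; lia).
    apply is_derive_unique. apply (LS_derive N); auto.
Qed.

Lemma sm_mul N f g : sm N f -> sm N g -> sm N (fun y => f y * g y).
Proof.
  intros Hf Hg n Hn x.
  apply (ex_derive_ext (LS f g n)).
  { intro t. symmetry. apply (leibniz N); auto. lia. }
  exists (LS f g (S n) x). apply (LS_derive N); auto.
Qed.


Definition NB (p0 al : R) (f : R -> R -> R) (M : R) : Prop :=
  exists s h, 0 <= s /\ 0 <= h /\ s + h <= M /\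
   (forall q p, p0 <= p <= 0 -> Rabs (f q p) <= s) /\
   (forall q p q' p', p0 <= p <= 0 -> p0 <= p' <= 0 -> (q, p) <> (q', p') ->
      Rabs (f q p - f q' p') <= h * Rpower (sqrt ((q - q') ^ 2 + (p - p') ^ 2)) al).

Lemma NB_ge0 p0 al f M : NB p0 al f M -> 0 <= M.
Proof. intros (s & h & Hs & Hh & HM & _). lra. Qed.

Lemma NB_le p0 al f M M' : NB p0 al f M -> M <= M' -> NB p0 al f M'.
Proof. intros (s & h & Hs & Hh & HM & H1 & H2) HMM. exists s, h. repeat split; auto; lra. Qed.

Lemma NB_ext p0 al f g M : NB p0 al f M -> (forall q p, p0 <= p <= 0 -> g q p = f q p) ->
  NB p0 al g M.
Proof.
  intros (s & h & Hs & Hh & HM & H1 & H2) E. exists s, h. repeat split; auto.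
  - intros q p Hp. rewrite E by auto. auto.
  - intros q p q' p' Hp Hp' Hne. rewrite !E by auto. auto.
Qed.

Lemma NB_mul p0 al f g M K : NB p0 al f M -> NB p0 al g K ->
  NB p0 al (fun q p => f q p * g q p) (M * K).
Proof.
  intros (s & h & Hs & Hh & HM & H1 & H2) (s' & h' & Hs' & Hh' & HK & H1' & H2').
  exists (s * s'), (s * h' + h * s'). repeat split.
  - nra.
  - nra.
  - nra.
  - intros q p Hp. rewrite Rabs_mult. apply Rmult_le_compat; auto using Rabs_pos.
  - intros q p q' p' Hp Hp' Hne.
    set (r := Rpower (sqrt ((q - q') ^ 2 + (p - p') ^ 2)) al).
    assert (Hr : 0 < r) by (unfold r, Rpower; apply exp_pos).
    specialize (H1 q p Hp). specialize (H1' q' p' Hp').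
    specialize (H2 q p q' p' Hp Hp' Hne). specialize (H2' q p q' p' Hp Hp' Hne).
    fold r in H2, H2'.
    replace (f q p * g q p - f q' p' * g q' p') with
      (f q p * (g q p - g q' p') + (f q p - f q' p') * g q' p') by ring.
    eapply Rle_trans; [apply Rabs_triang|]. rewrite !Rabs_mult.
    pose proof (Rabs_pos (f q p)). pose proof (Rabs_pos (g q p - g q' p')).
    pose proof (Rabs_pos (f q p - f q' p')). pose proof (Rabs_pos (g q' p')).
    assert (A1 : Rabs (f q p) * Rabs (g q p - g q' p') <= s * (h' * r)) by
      (apply Rmult_le_compat; auto).
    assert (A2 : Rabs (f q p - f q' p') * Rabs (g q' p') <= (h * r) * s') by
      (apply Rmult_le_compat; auto).
    nra.
Qed.

Lemma NB_plus p0 al f g M K : NB p0 al f M -> NB p0 al g K ->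
  NB p0 al (fun q p => f q p + g q p) (M + K).
Proof.
  intros (s & h & Hs & Hh & HM & H1 & H2) (s' & h' & Hs' & Hh' & HK & H1' & H2').
  exists (s + s'), (h + h'). repeat split; try lra.
  - intros q p Hp. eapply Rle_trans; [apply Rabs_triang|].
    specialize (H1 q p Hp). specialize (H1' q p Hp). lra.
  - intros q p q' p' Hp Hp' Hne.
    replace (f q p + g q p - (f q' p' + g q' p')) with
      ((f q p - f q' p') + (g q p - g q' p')) by ring.
    eapply Rle_trans; [apply Rabs_triang|].
    specialize (H2 q p q' p' Hp Hp' Hne). specialize (H2' q p q' p' Hp Hp' Hne). lra.
Qed.

Lemma NB_scal p0 al f c M : 0 <= c -> NB p0 al f M ->
  NB p0 al (fun q p => c * f q p) (c * M).
Proof.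
  intros Hc (s & h & Hs & Hh & HM & H1 & H2).
  exists (c * s), (c * h). repeat split; try nra.
  - intros q p Hp. rewrite Rabs_mult, Rabs_pos_eq by auto.
    apply Rmult_le_compat_l; auto.
  - intros q p q' p' Hp Hp' Hne.
    replace (c * f q p - c * f q' p') with (c * (f q p - f q' p')) by ring.
    rewrite Rabs_mult, Rabs_pos_eq by auto. rewrite Rmult_assoc.
    apply Rmult_le_compat_l; auto.
Qed.

Lemma NB_sum p0 al (F : nat -> R -> R -> R) (M : nat -> R) n :
  (forall k, (k <= n)%nat -> NB p0 al (F k) (M k)) ->
  NB p0 al (fun q p => sum_f_R0 (fun k => F k q p) n) (sum_f_R0 M n).
Proof.
  induction n as [|n IH]; intros H; simpl.
  - apply H; lia.
  - apply (NB_plus p0 al (fun q p => sum_f_R0 (fun k => F k q p) n) (F (S n))).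
    + apply IH; intros; apply H; lia.
    + apply H; lia.
Qed.

Lemma NB_holder p0 al f : p0 <= 0 -> in_holder p0 al f -> NB p0 al f (holder_norm p0 al f).
Proof.
  intros Hp0 [HS HH]. unfold holder_norm, holder_normE.
  rewrite <- HS, <- HH. simpl.
  set (s := real (sup_norm p0 f)) in *. set (h := real (holder_semi p0 al f)) in *.
  assert (CS := Lub_Rbar_correct (fun r => exists q p, in_clos p0 q p /\ r = Rabs (f q p))).
  assert (CH := Lub_Rbar_correct (fun r => exists q p q' p',
    in_clos p0 q p /\ in_clos p0 q' p' /\ (q, p) <> (q', p') /\
    r = Rabs (f q p - f q' p') / Rpower (sqrt ((q - q') ^ 2 + (p - p') ^ 2)) al)).
  destruct CS as [CS _]. destruct CH as [CH _].
  fold (sup_norm p0 f) in CS. fold (holder_semi p0 al f) in CH.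
  rewrite <- HS in CS. rewrite <- HH in CH. fold s in CS. fold h in CH.
  assert (S1 : forall q p, p0 <= p <= 0 -> Rabs (f q p) <= s).
  { intros q p Hp. apply (CS (Rabs (f q p))). exists q, p. split; auto. }
  assert (H1 : forall q p q' p', p0 <= p <= 0 -> p0 <= p' <= 0 -> (q, p) <> (q', p') ->
      Rabs (f q p - f q' p') <= h * Rpower (sqrt ((q - q') ^ 2 + (p - p') ^ 2)) al).
  { intros q p q' p' Hp Hp' Hne.
    set (r := Rpower (sqrt ((q - q') ^ 2 + (p - p') ^ 2)) al).
    assert (Hr : 0 < r) by (unfold r, Rpower; apply exp_pos).
    assert (E : Rabs (f q p - f q' p') / r <= h).
    { apply (CH (Rabs (f q p - f q' p') / r)). exists q, p, q', p'. repeat split; auto; try tauto. }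
    apply Rle_div_l in E; auto. }
  exists s, h. repeat split; auto; try lra.
  - eapply Rle_trans; [apply Rabs_pos|]. apply (S1 0 0). lra.
  - assert (Hne : (0, 0) <> (1, 0)).
    { intro E. injection E. lra. }
    specialize (H1 0 0 1 0 ltac:(lra) ltac:(lra) Hne).
    set (r := Rpower (sqrt ((0 - 1) ^ 2 + (0 - 0) ^ 2)) al) in H1.
    assert (Hr : 0 < r) by (unfold r, Rpower; apply exp_pos).
    pose proof (Rabs_pos (f 0 0 - f 1 0)). nra.
Qed.

Lemma NB_normE p0 al f M : NB p0 al f M -> Rbar_le (holder_normE p0 al f) (Finite M).
Proof.
  intros (s & h & Hs & Hh & HM & H1 & H2).
  apply Rbar_le_trans with (Rbar_plus (Finite s) (Finite h)); [|simpl; lra].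
  unfold holder_normE. apply Rbar_plus_le_compat.
  - unfold sup_norm. apply Lub_Rbar_correct. intros x (q & p & Hp & ->). simpl. apply H1; auto.
  - unfold holder_semi. apply Lub_Rbar_correct. intros x (q & p & q' & p' & Hp & Hp' & Hne & ->).
    simpl. set (r := Rpower (sqrt ((q - q') ^ 2 + (p - p') ^ 2)) al).
    assert (Hr : 0 < r) by (unfold r, Rpower; apply exp_pos).
    apply Rle_div_l; [exact Hr|]. apply H2; auto.
Qed.

Definition Bseq p0 al N (f : R -> R -> R) (a : nat -> R) : Prop :=
  forall k, (k <= N)%nat -> NB p0 al (dq k f) (a k).

Definition conv (a b : nat -> R) (n : nat) : R :=
  sum_f_R0 (fun k => bin n k * a k * b (n - k)%nat) n.

Lemma step p0 al N f g a b :
  smooth_q p0 N f -> smooth_q p0 N g -> Bseq p0 al N f a -> Bseq p0 al N g b ->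
  smooth_q p0 N (fun q p => f q p * g q p) /\
  Bseq p0 al N (fun q p => f q p * g q p) (conv a b).
Proof.
  intros Hf Hg Ha Hb.
  assert (Sf : forall p, p0 <= p <= 0 -> sm N (fun q' => f q' p)) by
    (intros p Hp n Hn x; apply Hf; auto).
  assert (Sg : forall p, p0 <= p <= 0 -> sm N (fun q' => g q' p)) by
    (intros p Hp n Hn x; apply Hg; auto).
  split.
  - intros p Hp n Hn q. apply (sm_mul N (fun q' => f q' p) (fun q' => g q' p)); auto.
  - intros n Hn. unfold conv.
    apply NB_ext with (fun q p => sum_f_R0 (fun k =>
        (fun q p => bin n k * dq k f q p * dq (n - k) g q p) q p) n).
    + apply (NB_sum p0 al (fun k q p => bin n k * dq k f q p * dq (n - k) g q p)
             (fun k => bin n k * a k * b (n - k)%nat)).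
      intros k Hk.
      apply (NB_mul p0 al (fun q p => bin n k * dq k f q p)).
      * apply NB_scal; [apply bin_ge0|]. apply Ha; lia.
      * apply Hb; lia.
    + intros q p Hp. unfold dq.
      rewrite (leibniz N (fun q' => f q' p) (fun q' => g q' p)); auto.
Qed.

Definition Cls N (psi : nat -> R) (B : R) (a : nat -> R) : Prop :=
  forall k, (k <= N)%nat -> 0 <= a k /\ a k <= B * psi k.

Lemma sum_ge0 (F : nat -> R) n : (forall k, (k <= n)%nat -> 0 <= F k) -> 0 <= sum_f_R0 F n.
Proof.
  induction n as [|n IH]; intros H; simpl.
  - apply H; lia.
  - pose proof (H (S n) (le_n _)). assert (0 <= sum_f_R0 F n) by (apply IH; intros; apply H; lia). lra.
Qed.

Lemma sum_ge_term (F : nat -> R) n j : (forall k, (k <= n)%nat -> 0 <= F k) -> (j <= n)%nat ->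
  F j <= sum_f_R0 F n.
Proof.
  induction n as [|n IH]; intros H Hj; simpl.
  - replace j with 0%nat by lia. lra.
  - destruct (Nat.eq_dec j (S n)) as [->|Hne].
    + assert (0 <= sum_f_R0 F n) by (apply sum_ge0; intros; apply H; lia). lra.
    + pose proof (H (S n) (le_n _)). assert (F j <= sum_f_R0 F n) by (apply IH; [intros; apply H|]; lia). lra.
Qed.

Lemma Cls_conv N psi K B1 B2 a b :
  (forall n, sum_f_R0 (fun k => bin n k * psi k * psi (n - k)%nat) n <= K * psi n) ->
  (forall k, 0 <= psi k) -> 0 <= B1 -> 0 <= B2 ->
  Cls N psi B1 a -> Cls N psi B2 b -> Cls N psi (K * B1 * B2) (conv a b).
Proof.
  intros HK Hpsi HB1 HB2 Ha Hb n Hn. unfold conv. split.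
  - apply sum_ge0. intros k Hk.
    destruct (Ha k ltac:(lia)). destruct (Hb (n - k)%nat ltac:(lia)).
    pose proof (bin_ge0 n k).
    apply Rmult_le_pos; [apply Rmult_le_pos|]; auto.
  - apply Rle_trans with (sum_f_R0 (fun k => (bin n k * psi k * psi (n - k)%nat) * (B1 * B2)) n).
    + apply sum_Rle. intros k Hk.
      destruct (Ha k ltac:(lia)). destruct (Hb (n - k)%nat ltac:(lia)).
      pose proof (bin_ge0 n k). pose proof (Hpsi k). pose proof (Hpsi (n - k)%nat).
      replace (bin n k * psi k * psi (n - k)%nat * (B1 * B2)) with
        (bin n k * (B1 * psi k) * (B2 * psi (n - k)%nat)) by ring.
      apply Rmult_le_compat; [apply Rmult_le_pos; auto| auto| |auto].
      apply Rmult_le_compat_l; auto.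
    + rewrite <- scal_sum. specialize (HK n).
      replace (K * B1 * B2 * psi n) with (B1 * B2 * (K * psi n)) by ring.
      apply Rmult_le_compat_l; [apply Rmult_le_pos|]; auto.
Qed.

Lemma sum_rev (F : nat -> R) n : sum_f_R0 (fun k => F (n - k)%nat) n = sum_f_R0 F n.
Proof.
  induction n as [|n IH].
  - reflexivity.
  - rewrite (decomp_sum _ (S n)) by lia. simpl Nat.pred. rewrite Nat.sub_0_r.
    change (sum_f_R0 (fun i => F (S n - S i)%nat) n) with (sum_f_R0 (fun i => F (n - i)%nat) n).
    rewrite IH, tech5. ring.
Qed.

Lemma tele n : sum_f_R0 (fun k => 1 / ((INR k + 1) * (INR k + 2))) n = 1 - 1 / (INR n + 2).
Proof.
  pose proof (pos_INR n).
  induction n as [|n IH].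
  - simpl. field.
  - rewrite tech5, IH by (apply pos_INR). rewrite S_INR. pose proof (pos_INR n). field. lra.
Qed.

Lemma sum_invP (P : nat -> R) n : (forall k, (INR k + 1) * (INR k + 2) <= P k) ->
  sum_f_R0 (fun k => / P k) n <= 1.
Proof.
  intros HP. apply Rle_trans with (sum_f_R0 (fun k => 1 / ((INR k + 1) * (INR k + 2))) n).
  - apply sum_Rle. intros k _. pose proof (pos_INR k). specialize (HP k).
    unfold Rdiv. rewrite Rmult_1_l. apply Rinv_le_contravar; nra.
  - rewrite tele. pose proof (pos_INR n).
    assert (0 < 1 / (INR n + 2)) by (apply Rdiv_lt_0_compat; lra). lra.
Qed.

Lemma comb_gen (G P : nat -> R) c K :
  (forall k, 0 <= G k) -> (forall k, G k * P k <= c * INR (fact k)) ->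
  (forall k, INR (fact k) <= G k * P k) ->
  (forall k, (INR k + 1) * (INR k + 2) <= P k) ->
  (forall a b, P (a + b)%nat <= K * (P a + P b)) -> 0 <= c -> 0 <= K ->
  forall n, sum_f_R0 (fun k => bin n k * G k * G (n - k)%nat) n <= 2 * K * c ^ 2 * G n.
Proof.
  intros HG0 HG1 HG2 HP HPK Hc HK n.
  assert (Ppos : forall k, 0 < P k).
  { intro k. pose proof (pos_INR k). specialize (HP k). nra. }
  assert (Gle : forall k, G k <= c * INR (fact k) / P k).
  { intro k. apply (Rmult_le_reg_r (P k)); [auto|]. unfold Rdiv.
    rewrite Rmult_assoc, Rinv_l by (apply Rgt_not_eq, Ppos). rewrite Rmult_1_r. auto. }
  set (fn := INR (fact n)). set (Pn := P n).
  apply Rle_trans with (sum_f_R0 (fun k => c ^ 2 * K * (fn / Pn) * (/ P k + / P (n - k)%nat)) n).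
  - apply sum_Rle. intros k Hk.
    pose proof (bin_fact n k Hk) as BF.
    set (j := (n - k)%nat) in *.
    assert (Hn : n = (k + j)%nat) by (unfold j; lia).
    pose proof (HPK k j) as HK'. rewrite <- Hn in HK'. fold Pn in HK'.
    pose proof (Gle k) as Gk. pose proof (Gle j) as Gj.
    pose proof (HG0 k). pose proof (HG0 j). pose proof (bin_ge0 n k).
    pose proof (Ppos k) as Pk. pose proof (Ppos j) as Pj. pose proof (Ppos n) as Pn0. fold Pn in Pn0.
    pose proof (INR_fact_lt_0 k). pose proof (INR_fact_lt_0 j).
    apply Rle_trans with (bin n k * (c * INR (fact k) / P k) * (c * INR (fact j) / P j)).
    { apply Rmult_le_compat; auto.
      - apply Rmult_le_pos; auto.
      - apply Rmult_le_compat_l; auto. }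
    replace (bin n k * (c * INR (fact k) / P k) * (c * INR (fact j) / P j)) with
      (c ^ 2 * fn * / (P k * P j)) by (unfold fn; rewrite <- BF; field; lra).
    replace (c ^ 2 * K * (fn / Pn) * (/ P k + / P j)) with
      (c ^ 2 * fn * (K * (P k + P j) / (Pn * (P k * P j)))) by (field; lra).
    apply Rmult_le_compat_l.
    { apply Rmult_le_pos; [apply pow2_ge_0|]. unfold fn; apply pos_INR. }
    apply (Rmult_le_reg_r (Pn * (P k * P j))). { apply Rmult_lt_0_compat; [|apply Rmult_lt_0_compat]; auto. }
    unfold Rdiv. rewrite Rmult_assoc, Rinv_l by (apply Rgt_not_eq; apply Rmult_lt_0_compat; [|apply Rmult_lt_0_compat]; auto).
    rewrite Rinv_mult. replace (/ P k * / P j * (Pn * (P k * P j))) with Pn by (field; lra).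
    lra.
  - rewrite (sum_eq _ (fun k => (/ P k + / P (n - k)%nat) * (c ^ 2 * K * (fn / Pn)))) by (intros; ring).
    rewrite <- scal_sum. rewrite sum_plus, (sum_rev (fun k => / P k)).
    assert (S1 := sum_invP P n HP).
    assert (fn <= G n * Pn) by apply HG2.
    assert (fn / Pn <= G n).
    { apply (Rmult_le_reg_r Pn); [apply Ppos|]. unfold Rdiv. rewrite Rmult_assoc, Rinv_l by (apply Rgt_not_eq, Ppos). lra. }
    assert (0 <= fn / Pn) by (apply Rdiv_le_0_compat; [unfold fn; apply pos_INR| apply Ppos]).
    assert (0 <= c ^ 2 * K) by (apply Rmult_le_pos; [apply pow2_ge_0|auto]).
    assert (0 <= sum_f_R0 (fun k => / P k) n) by (apply sum_ge0; intros; apply Rlt_le, Rinv_0_lt_compat, Ppos).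
    set (Sg := sum_f_R0 (fun k => / P k) n) in *.
    apply Rle_trans with (c ^ 2 * K * (fn / Pn) * 2).
    + apply Rmult_le_compat_l; [apply Rmult_le_pos; auto|]. lra.
    + replace (2 * K * c ^ 2 * G n) with (c ^ 2 * K * G n * 2) by ring.
      apply Rmult_le_compat_r; [lra|]. apply Rmult_le_compat_l; auto.
Qed.

Definition Gm (m k : nat) : R := if (k <? m)%nat then 1 else INR (fact (k - m)).
Definition lam (L c : R) (m n : nat) : R := if (n <? m)%nat then 1 else Rpower L (INR n - c).
Definition psi (L c : R) (m k : nat) : R := lam L c m k * Gm m k.

Lemma Gm_ge0 m k : 0 <= Gm m k.
Proof. unfold Gm. destruct (k <? m)%nat; [lra| apply pos_INR]. Qed.

Lemma lam_ge0 L c m k : 0 <= lam L c m k.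
Proof. unfold lam. destruct (k <? m)%nat; [lra| unfold Rpower; apply Rlt_le, exp_pos]. Qed.

Lemma psi_ge0 L c m k : 0 <= psi L c m k.
Proof. unfold psi. apply Rmult_le_pos; [apply lam_ge0|apply Gm_ge0]. Qed.

Lemma lam_mul L c m n k : 1 <= L -> 0 <= c -> c <= INR m -> (k <= n)%nat ->
  lam L c m k * lam L c m (n - k) <= lam L c m n.
Proof.
  intros HL Hc Hcm Hk. unfold lam.
  assert (R1 : forall x, 0 <= x -> 1 <= Rpower L x).
  { intros x Hx. rewrite <- (Rpower_O L) by lra. apply Rle_Rpower; lra. }
  destruct (Nat.ltb_spec n m) as [Hn|Hn].
  - destruct (Nat.ltb_spec k m); [|lia]. destruct (Nat.ltb_spec (n - k) m); [|lia]. lra.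
  - assert (INR m <= INR n) by (apply le_INR; auto).
    assert (INR k <= INR n) by (apply le_INR; auto).
    rewrite minus_INR by auto.
    destruct (Nat.ltb_spec k m); destruct (Nat.ltb_spec (n - k) m).
    + rewrite Rmult_1_l. apply R1. lra.
    + rewrite Rmult_1_l. apply Rle_Rpower; auto. pose proof (pos_INR k). lra.
    + rewrite Rmult_1_r. apply Rle_Rpower; auto. lra.
    + rewrite <- Rpower_plus. apply Rle_Rpower; auto. lra.
Qed.

Lemma psi_comb L c m (P : nat -> R) c0 K :
  1 <= L -> 0 <= c -> c <= INR m ->
  (forall k, Gm m k * P k <= c0 * INR (fact k)) ->
  (forall k, INR (fact k) <= Gm m k * P k) ->
  (forall k, (INR k + 1) * (INR k + 2) <= P k) ->
  (forall a b, P (a + b)%nat <= K * (P a + P b)) -> 0 <= c0 -> 0 <= K ->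
  forall n, sum_f_R0 (fun k => bin n k * psi L c m k * psi L c m (n - k)%nat) n
     <= (2 * K * c0 ^ 2) * psi L c m n.
Proof.
  intros HL Hc Hcm H1 H2 H3 H4 Hc0 HK n.
  pose proof (comb_gen (Gm m) P c0 K (Gm_ge0 m) H1 H2 H3 H4 Hc0 HK n) as C.
  apply Rle_trans with (sum_f_R0 (fun k => (bin n k * Gm m k * Gm m (n - k)%nat) * lam L c m n) n).
  - apply sum_Rle. intros k Hk. unfold psi.
    pose proof (lam_mul L c m n k HL Hc Hcm Hk).
    pose proof (bin_ge0 n k). pose proof (Gm_ge0 m k). pose proof (Gm_ge0 m (n - k)).
    replace (bin n k * (lam L c m k * Gm m k) * (lam L c m (n - k) * Gm m (n - k)))
      with ((bin n k * Gm m k * Gm m (n - k)%nat) * (lam L c m k * lam L c m (n - k))) by ring.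
    apply Rmult_le_compat_l; auto. apply Rmult_le_pos; [apply Rmult_le_pos|]; auto.
  - rewrite <- scal_sum. unfold psi. pose proof (lam_ge0 L c m n).
    replace (2 * K * c0 ^ 2 * (lam L c m n * Gm m n)) with (lam L c m n * (2 * K * c0 ^ 2 * Gm m n)) by ring.
    apply Rmult_le_compat_l; auto.
Qed.

Definition P2 (k : nat) : R := (INR k + 1) * (INR k + 2).
Definition P3 (k : nat) : R := (INR k + 1) * (INR k + 2) * (INR k + 3).

Lemma G2_a k : Gm 2 k * P2 k <= 6 * INR (fact k).
Proof.
  unfold Gm, P2. destruct k as [|[|j]].
  - simpl. lra.
  - simpl. lra.
  - replace ((S (S j) <? 2)%nat) with false by reflexivity.
    replace (S (S j) - 2)%nat with j by lia. rewrite !fact_simpl, !mult_INR, !S_INR.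
    pose proof (INR_fact_lt_0 j). pose proof (pos_INR j). nra.
Qed.

Lemma G2_b k : INR (fact k) <= Gm 2 k * P2 k.
Proof.
  unfold Gm, P2. destruct k as [|[|j]].
  - simpl. lra.
  - simpl. lra.
  - replace ((S (S j) <? 2)%nat) with false by reflexivity.
    replace (S (S j) - 2)%nat with j by lia. rewrite !fact_simpl, !mult_INR, !S_INR.
    pose proof (INR_fact_lt_0 j). pose proof (pos_INR j). nra.
Qed.

Lemma P2_lb k : (INR k + 1) * (INR k + 2) <= P2 k.
Proof. unfold P2; lra. Qed.

Lemma P2_K a b : P2 (a + b)%nat <= 2 * (P2 a + P2 b).
Proof. unfold P2. rewrite plus_INR. pose proof (pos_INR a). pose proof (pos_INR b). pose proof (pow2_ge_0 (INR a - INR b)). nra. Qed.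

Lemma G3_a k : Gm 3 k * P3 k <= 60 * INR (fact k).
Proof.
  unfold Gm, P3. destruct k as [|[|[|j]]].
  - simpl. lra.
  - simpl. lra.
  - simpl. lra.
  - replace ((S (S (S j)) <? 3)%nat) with false by reflexivity.
    replace (S (S (S j)) - 3)%nat with j by lia. rewrite !fact_simpl, !mult_INR, !S_INR.
    pose proof (INR_fact_lt_0 j). pose proof (pos_INR j).
    set (x := INR j) in *. set (y := INR (fact j)) in *.
    assert ((x + 1 + 1 + 1 + 1) * (x + 1 + 1 + 1 + 2) * (x + 1 + 1 + 1 + 3) <=
            60 * ((x + 1 + 1 + 1) * ((x + 1 + 1) * (x + 1)))) by nra.
    nra.
Qed.

Lemma G3_b k : INR (fact k) <= Gm 3 k * P3 k.
Proof.
  unfold Gm, P3. destruct k as [|[|[|j]]].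
  - simpl. lra.
  - simpl. lra.
  - simpl. lra.
  - replace ((S (S (S j)) <? 3)%nat) with false by reflexivity.
    replace (S (S (S j)) - 3)%nat with j by lia. rewrite !fact_simpl, !mult_INR, !S_INR.
    pose proof (INR_fact_lt_0 j). pose proof (pos_INR j).
    set (x := INR j) in *. set (y := INR (fact j)) in *.
    assert ((x + 1 + 1 + 1) * ((x + 1 + 1) * (x + 1)) <=
      (x + 1 + 1 + 1 + 1) * (x + 1 + 1 + 1 + 2) * (x + 1 + 1 + 1 + 3)) by nra.
    nra.
Qed.

Lemma P3_lb k : (INR k + 1) * (INR k + 2) <= P3 k.
Proof. unfold P3. pose proof (pos_INR k). nra. Qed.

Lemma P3_K a b : P3 (a + b)%nat <= 4 * (P3 a + P3 b).
Proof. unfold P3. rewrite plus_INR. pose proof (pos_INR a). pose proof (pos_INR b).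
  set (x := INR a) in *. set (y := INR b) in *. assert (0 <= (x + y) * (x - y) ^ 2) by (apply Rmult_le_pos; [lra|apply pow2_ge_0]). pose proof (pow2_ge_0 (x - y)). nra. Qed.

Definition Good p0 al N (ps : nat -> R) (f : R -> R -> R) (B : R) : Prop :=
  exists a, smooth_q p0 N f /\ Bseq p0 al N f a /\ Cls N ps B a.

Lemma Good_mul p0 al N ps K f g B1 B2 :
  (forall n, sum_f_R0 (fun k => bin n k * ps k * ps (n - k)%nat) n <= K * ps n) ->
  (forall k, 0 <= ps k) -> 0 <= B1 -> 0 <= B2 ->
  Good p0 al N ps f B1 -> Good p0 al N ps g B2 ->
  Good p0 al N ps (fun q p => f q p * g q p) (K * B1 * B2).
Proof.
  intros HK Hps HB1 HB2 (a & Sa & Ba & Ca) (b & Sb & Bb & Cb).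
  destruct (step p0 al N f g a b Sa Sb Ba Bb) as [S1 B1'].
  exists (conv a b). split; [|split]; auto.
  apply Cls_conv; auto.
Qed.

Lemma Good_final p0 al N ps f B n : Good p0 al N ps f B -> (n <= N)%nat ->
  Rbar_le (holder_normE p0 al (dq n f)) (Finite (B * ps n)).
Proof.
  intros (a & Sa & Ba & Ca) Hn.
  apply Rbar_le_trans with (Finite (a n)).
  - apply NB_normE. apply Ba; auto.
  - simpl. apply Ca; auto.
Qed.

Lemma hn_ge0 p0 al f : p0 < 0 -> in_holder p0 al f -> 0 <= holder_norm p0 al f.
Proof. intros H1 H2. eapply NB_ge0. apply NB_holder; auto. lra. Qed.

Lemma Good_base p0 al N m L c u B : p0 < 0 -> admissible p0 al N u -> 1 <= L -> 1 <= B ->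
  (forall n, (m <= n <= N)%nat -> holder_norm p0 al (dq n u) <= Rpower L (INR n - c) * INR (fact (n - m))) ->
  (forall k, (k < m)%nat -> holder_norm p0 al (dq k u) <= B) ->
  Good p0 al N (psi L c m) u B.
Proof.
  intros Hp0 (Hper & Hsm & Hh) HL HB H1 H2.
  exists (fun k => holder_norm p0 al (dq k u)). split; [|split]; auto.
  - intros k Hk. apply NB_holder; auto. lra.
  - intros k Hk. split. { apply hn_ge0; auto. }
    unfold psi, lam, Gm. destruct (Nat.ltb_spec k m) as [Hkm|Hkm].
    + rewrite !Rmult_1_r. apply H2; auto.
    + assert (0 <= Rpower L (INR k - c) * INR (fact (k - m))).
      { apply Rmult_le_pos; [unfold Rpower; apply Rlt_le, exp_pos| apply pos_INR]. }
      eapply Rle_trans; [apply H1; lia|]. nra.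
Qed.

Lemma B_bounds (T : nat -> R) n : (forall i, (i <= n)%nat -> 0 <= T i) ->
  1 <= 1 + sum_f_R0 T n /\ forall i, (i <= n)%nat -> T i <= 1 + sum_f_R0 T n.
Proof.
  intros H. assert (0 <= sum_f_R0 T n) by (apply sum_ge0; auto).
  split; [lra|]. intros i Hi. pose proof (sum_ge_term T n i H Hi). lra.
Qed.

Lemma pow_mono_fin Kc B X j e : 0 <= X -> 0 <= Kc -> 1 <= B -> (j <= e)%nat ->
  Kc * B ^ j * X <= Kc * B ^ e * X.
Proof.
  intros HX HK HB Hje. apply Rmult_le_compat_r; auto. apply Rmult_le_compat_l; auto.
  apply Rle_pow; auto.
Qed.

Lemma psi_big L c m n : (m <= n)%nat -> psi L c m n = Rpower L (INR n - c) * INR (fact (n - m)).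
Proof. intros H. unfold psi, lam, Gm. destruct (Nat.ltb_spec n m); [lia|]. reflexivity. Qed.

Lemma RF_ge0 L x k : 0 <= Rpower L x * INR (fact k).
Proof. apply Rmult_le_pos; [unfold Rpower; apply Rlt_le, exp_pos| apply pos_INR]. Qed.

Theorem lemma2p2 (p0 alpha : R) (hp0 : p0 < 0) (ha : 0 < alpha < 1) :
  (* (i) *)
  (exists C0 : R, 1 < C0 /\
    forall (N : nat) (u : nat -> R -> R -> R) (L : R),
      (3 <= N)%nat ->
      (forall i, (i < 5)%nat -> admissible p0 alpha N (u i)) ->
      1 <= L ->
      (forall i n, (i < 5)%nat -> (2 <= n <= N)%nat ->
         holder_norm p0 alpha (dq n (u i))
           <= Rpower L (INR n - 3 / 2) * INR (fact (n - 2))) ->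
      forall n, (2 <= n <= N)%nat ->
        Rbar_le
          (holder_normE p0 alpha
             (dq n (fun q p => u 0%nat q p * u 1%nat q p * u 2%nat q p
                               * u 3%nat q p * u 4%nat q p)))
          (C0 * (1 + sum_f_R0 (fun i => holder_norm p0 alpha (dq 0 (u i))
                                      + holder_norm p0 alpha (dq 1 (u i))) 4) ^ 16
              * Rpower L (INR n - 3 / 2) * INR (fact (n - 2)))) /\
  (* (ii) *)
  (exists C1 : R, 1 < C1 /\
    forall (N : nat) (u : nat -> R -> R -> R) (L : R),
      (3 <= N)%nat ->
      (forall i, (i < 3)%nat -> admissible p0 alpha N (u i)) ->
      1 <= L ->
      (forall i n, (i < 3)%nat -> (2 <= n <= N)%nat ->
         holder_norm p0 alpha (dq n (u i))
           <= Rpower L (INR n - 1) * INR (fact (n - 2))) ->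
      forall n, (2 <= n <= N)%nat ->
        Rbar_le
          (holder_normE p0 alpha
             (dq n (fun q p => u 0%nat q p * u 1%nat q p * u 2%nat q p)))
          (C1 * (1 + sum_f_R0 (fun i => holder_norm p0 alpha (dq 0 (u i))
                                      + holder_norm p0 alpha (dq 1 (u i))) 2) ^ 6
              * Rpower L (INR n - 1) * INR (fact (n - 2)))) /\
  (* (iii) *)
  (exists C2 : R, 1 < C2 /\
    forall (N : nat) (u : nat -> R -> R -> R) (L : R),
      (3 <= N)%nat ->
      (forall i, (i < 2)%nat -> admissible p0 alpha N (u i)) ->
      1 <= L ->
      (forall i n, (i < 2)%nat -> (3 <= n <= N)%nat ->
         holder_norm p0 alpha (dq n (u i))
           <= Rpower L (INR n - 2) * INR (fact (n - 3))) ->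
      forall n, (3 <= n <= N)%nat ->
        Rbar_le
          (holder_normE p0 alpha
             (dq n (fun q p => u 0%nat q p * u 1%nat q p)))
          (C2 * (1 + sum_f_R0 (fun i => holder_norm p0 alpha (dq 0 (u i))
                                      + holder_norm p0 alpha (dq 1 (u i))
                                      + holder_norm p0 alpha (dq 2 (u i))) 1) ^ 2
              * Rpower L (INR n - 2) * INR (fact (n - 3)))).
Proof.
  assert (HK2 : forall L c, 1 <= L -> 0 <= c -> c <= 2 ->
    forall n, sum_f_R0 (fun k => bin n k * psi L c 2 k * psi L c 2 (n - k)%nat) n
       <= (2 * 2 * 6 ^ 2) * psi L c 2 n).
  { intros L c HL Hc Hc2.
    exact (psi_comb L c 2 P2 6 2 HL Hc ltac:(simpl; lra) G2_a G2_b P2_lb P2_K ltac:(lra) ltac:(lra)). }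
  assert (HK3 : forall L c, 1 <= L -> 0 <= c -> c <= 3 ->
    forall n, sum_f_R0 (fun k => bin n k * psi L c 3 k * psi L c 3 (n - k)%nat) n
       <= (2 * 4 * 60 ^ 2) * psi L c 3 n).
  { intros L c HL Hc Hc2.
    exact (psi_comb L c 3 P3 60 4 HL Hc ltac:(simpl; lra) G3_a G3_b P3_lb P3_K ltac:(lra) ltac:(lra)). }
  split; [|split].
  - exists ((2 * 2 * 6 ^ 2) ^ 4). split; [simpl; lra|].
    intros N u L HN Hadm HL Hb n Hn.
    set (K := 2 * 2 * 6 ^ 2).
    set (T := fun i => holder_norm p0 alpha (dq 0 (u i)) + holder_norm p0 alpha (dq 1 (u i))).
    assert (HT : forall i, (i <= 4)%nat -> 0 <= holder_norm p0 alpha (dq 0 (u i)) /\ 0 <= holder_norm p0 alpha (dq 1 (u i))).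
    { intros i Hi. destruct (Hadm i ltac:(lia)) as (_ & _ & Hh).
      split; apply hn_ge0; auto; apply Hh; lia. }
    destruct (B_bounds T 4) as [HB1 HBi].
    { intros i Hi. destruct (HT i Hi). unfold T. lra. }
    set (B := 1 + sum_f_R0 T 4) in *.
    assert (G : forall i, (i < 5)%nat -> Good p0 alpha N (psi L (3/2) 2) (u i) B).
    { intros i Hi. apply Good_base; auto.
      - intros k Hk. pose proof (HBi i ltac:(lia)). destruct (HT i ltac:(lia)). unfold T in *.
        destruct k as [|[|k]]; [lra|lra|lia]. }
    assert (Hps : forall k, 0 <= psi L (3/2) 2 k) by (intro; apply psi_ge0).
    assert (HKk := HK2 L (3/2) HL ltac:(lra) ltac:(lra)). fold K in HKk.
    assert (HK0 : 0 <= K) by (unfold K; lra).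
    assert (HB0 : 0 <= B) by lra.
    pose proof (Good_mul _ _ _ _ _ _ _ B B HKk Hps HB0 HB0 (G 0%nat ltac:(lia)) (G 1%nat ltac:(lia))) as G2.
    assert (0 <= K * B * B) by (repeat apply Rmult_le_pos; lra).
    pose proof (Good_mul _ _ _ _ _ _ _ _ B HKk Hps H HB0 G2 (G 2%nat ltac:(lia))) as G3.
    assert (0 <= K * (K * B * B) * B) by (repeat apply Rmult_le_pos; lra).
    pose proof (Good_mul _ _ _ _ _ _ _ _ B HKk Hps H0 HB0 G3 (G 3%nat ltac:(lia))) as G4.
    assert (0 <= K * (K * (K * B * B) * B) * B) by (repeat apply Rmult_le_pos; lra).
    pose proof (Good_mul _ _ _ _ _ _ _ _ B HKk Hps H1 HB0 G4 (G 4%nat ltac:(lia))) as G5.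
    eapply Rbar_le_trans; [exact (Good_final _ _ _ _ _ _ n G5 ltac:(lia))|].
    unfold Rbar_le; cbv beta iota. rewrite psi_big by lia.
    pose proof (RF_ge0 L (INR n - 3/2) (n - 2)).
    replace (K * (K * (K * (K * B * B) * B) * B) * B * (Rpower L (INR n - 3 / 2) * INR (fact (n - 2))))
      with (K ^ 4 * B ^ 5 * (Rpower L (INR n - 3 / 2) * INR (fact (n - 2)))) by ring.
    replace (K ^ 4 * B ^ 16 * Rpower L (INR n - 3 / 2) * INR (fact (n - 2)))
      with (K ^ 4 * B ^ 16 * (Rpower L (INR n - 3 / 2) * INR (fact (n - 2)))) by ring.
    apply pow_mono_fin; [auto|apply pow_le; auto|auto|lia].
  - exists ((2 * 2 * 6 ^ 2) ^ 2). split; [simpl; lra|].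
    intros N u L HN Hadm HL Hb n Hn.
    set (K := 2 * 2 * 6 ^ 2).
    set (T := fun i => holder_norm p0 alpha (dq 0 (u i)) + holder_norm p0 alpha (dq 1 (u i))).
    assert (HT : forall i, (i <= 2)%nat -> 0 <= holder_norm p0 alpha (dq 0 (u i)) /\ 0 <= holder_norm p0 alpha (dq 1 (u i))).
    { intros i Hi. destruct (Hadm i ltac:(lia)) as (_ & _ & Hh).
      split; apply hn_ge0; auto; apply Hh; lia. }
    destruct (B_bounds T 2) as [HB1 HBi].
    { intros i Hi. destruct (HT i Hi). unfold T. lra. }
    set (B := 1 + sum_f_R0 T 2) in *.
    assert (G : forall i, (i < 3)%nat -> Good p0 alpha N (psi L 1 2) (u i) B).
    { intros i Hi. apply Good_base; auto.
      intros k Hk. pose proof (HBi i ltac:(lia)). destruct (HT i ltac:(lia)). unfold T in *.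
      destruct k as [|[|k]]; [lra|lra|lia]. }
    assert (Hps : forall k, 0 <= psi L 1 2 k) by (intro; apply psi_ge0).
    assert (HKk := HK2 L 1 HL ltac:(lra) ltac:(lra)). fold K in HKk.
    assert (HK0 : 0 <= K) by (unfold K; lra).
    assert (HB0 : 0 <= B) by lra.
    pose proof (Good_mul _ _ _ _ _ _ _ B B HKk Hps HB0 HB0 (G 0%nat ltac:(lia)) (G 1%nat ltac:(lia))) as G2.
    assert (0 <= K * B * B) by (repeat apply Rmult_le_pos; lra).
    pose proof (Good_mul _ _ _ _ _ _ _ _ B HKk Hps H HB0 G2 (G 2%nat ltac:(lia))) as G3.
    eapply Rbar_le_trans; [exact (Good_final _ _ _ _ _ _ n G3 ltac:(lia))|].
    unfold Rbar_le; cbv beta iota. rewrite psi_big by lia.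
    pose proof (RF_ge0 L (INR n - 1) (n - 2)).
    replace (K * (K * B * B) * B * (Rpower L (INR n - 1) * INR (fact (n - 2))))
      with (K ^ 2 * B ^ 3 * (Rpower L (INR n - 1) * INR (fact (n - 2)))) by ring.
    replace (K ^ 2 * B ^ 6 * Rpower L (INR n - 1) * INR (fact (n - 2)))
      with (K ^ 2 * B ^ 6 * (Rpower L (INR n - 1) * INR (fact (n - 2)))) by ring.
    apply pow_mono_fin; [auto|apply pow_le; auto|auto|lia].
  - exists (2 * 4 * 60 ^ 2). split; [lra|].
    intros N u L HN Hadm HL Hb n Hn.
    set (K := 2 * 4 * 60 ^ 2).
    set (T := fun i => holder_norm p0 alpha (dq 0 (u i)) + holder_norm p0 alpha (dq 1 (u i))
                      + holder_norm p0 alpha (dq 2 (u i))).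
    assert (HT : forall i, (i <= 1)%nat -> 0 <= holder_norm p0 alpha (dq 0 (u i)) /\
        0 <= holder_norm p0 alpha (dq 1 (u i)) /\ 0 <= holder_norm p0 alpha (dq 2 (u i))).
    { intros i Hi. destruct (Hadm i ltac:(lia)) as (_ & _ & Hh).
      split; [|split]; apply hn_ge0; auto; apply Hh; lia. }
    destruct (B_bounds T 1) as [HB1 HBi].
    { intros i Hi. destruct (HT i Hi) as (? & ? & ?). unfold T. lra. }
    set (B := 1 + sum_f_R0 T 1) in *.
    assert (G : forall i, (i < 2)%nat -> Good p0 alpha N (psi L 2 3) (u i) B).
    { intros i Hi. apply Good_base; auto.
      intros k Hk. pose proof (HBi i ltac:(lia)). destruct (HT i ltac:(lia)) as (? & ? & ?). unfold T in *.
      destruct k as [|[|[|k]]]; [lra|lra|lra|lia]. }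
    assert (Hps : forall k, 0 <= psi L 2 3 k) by (intro; apply psi_ge0).
    assert (HKk := HK3 L 2 HL ltac:(lra) ltac:(lra)). fold K in HKk.
    assert (HK0 : 0 <= K) by (unfold K; lra).
    assert (HB0 : 0 <= B) by lra.
    pose proof (Good_mul _ _ _ _ _ _ _ B B HKk Hps HB0 HB0 (G 0%nat ltac:(lia)) (G 1%nat ltac:(lia))) as G2.
    eapply Rbar_le_trans; [exact (Good_final _ _ _ _ _ _ n G2 ltac:(lia))|].
    unfold Rbar_le; cbv beta iota. rewrite psi_big by lia.
    pose proof (RF_ge0 L (INR n - 2) (n - 3)).
    replace (K * B * B * (Rpower L (INR n - 2) * INR (fact (n - 3))))
      with (K * B ^ 2 * (Rpower L (INR n - 2) * INR (fact (n - 3)))) by ring.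
    replace (K * B ^ 2 * Rpower L (INR n - 2) * INR (fact (n - 3)))
      with (K * B ^ 2 * (Rpower L (INR n - 2) * INR (fact (n - 3)))) by ring.
    lra.
Qed.
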